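(* Let $\mathbb{F}$ be an algebraically closed field of characteristic $0$, $D$ an $\mathbb{F}$-vector space with $\dim D=3$, and $\Gamma\subseteq D^{\ast}$ an additive subgroup with $\Gamma\simeq\mathbb{Z}^3$ and $\bigcap_{\alpha\in\Gamma}\ker\alpha=\{0\}$. Let $M=\bigoplus_{\theta\in\Gamma}M_\theta$ be a $\Gamma$-graded $\mathcal{S}(\Gamma,D)$-module with $\dim M_\theta=1$ for each $\theta$, and write $M_\theta=\mathbb{F}w_\theta$. Fix $0\neq\sigma\in\Gamma$, nonzero $\partial,\partial'\in\ker\sigma$ and $\nu\in\Gamma$, and define scalars $c_i$ ($i\in\mathbb{Z}$) by $x^{-\sigma}\partial'.x^{\sigma}\partial.w_{\nu+i\sigma}=c_iw_{\nu+i\sigma}$. Then $c_i=c$ is independent of $i$. Moreover, if $c\neq0$, then for each $a\in\{\sqrt c,-\sqrt c\}$ there exist nonzero $v_{\nu+i\sigma}\in M_{\nu+i\sigma}$ ($i\in\mathbb{Z}$) such that $x^{\sigma}\partial.v_{\nu+(i-1)\sigma}=a\,v_{\nu+i\sigma}$ and $x^{-\sigma}\partial'.v_{\nu+i\sigma}=a\,v_{\nu+(i-1)\sigma}$ for all $i\in\mathbb{Z}$.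
   Context: $\mathcal{S}(\Gamma,D)$ is the Lie algebra spanned by symbols $x^\alpha\partial$ with $\alpha\in\Gamma\setminus\{0\}$, $\partial\in\ker\alpha$ (linear in $\partial$), with bracket $[x^\alpha\partial_1,x^\beta\partial_2]=x^{\alpha+\beta}(\beta(\partial_1)\partial_2-\alpha(\partial_2)\partial_1)$ (the subalgebra of the generalized Witt algebra $\mathbb{F}[\Gamma]\otimes D$). A $\Gamma$-graded module satisfies $x^\alpha\partial.M_\theta\subseteq M_{\alpha+\theta}$. *)

(* Defs.v *)
From HB Require Import structures.
From mathcomp Require Import all_boot all_order all_algebra.
Set Implicit Arguments. Unset Strict Implicit. Unset Printing Implicit Defensive.
Import Order.TTheory GRing.Theory Num.Theory.
Local Open Scope ring_scope.

(* D := F^3 (row vectors 'rV[F]_3); D^* is identified with 'rV[F]_3 via the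
   standard pairing [ev]. *)
Definition ev (F : fieldType) (g d : 'rV[F]_3) : F := \sum_(i < 3) g 0 i * d 0 i.

(* Gamma is the image of Z^3 = 'rV[int]_3 under the additive map
   n |-> n_0 g_0 + n_1 g_1 + n_2 g_2 (which is required to be injective). *)
Definition gam (F : fieldType) (g : 'I_3 -> 'rV[F]_3) (n : 'rV[int]_3) : 'rV[F]_3 :=
  \sum_(i < 3) (n 0 i)%:~R *: g i.

Definition lincomb (F : fieldType) (M : lmodType F) (w : 'rV[int]_3 -> M)
  (s : seq 'rV[int]_3) (k : 'rV[int]_3 -> F) : M :=
  \sum_(t <- s) k t *: w t.

(* [rho a d] is the action of x^{gam a} d on M (meaningful for a != 0 and
   d in ker (gam a)).  The module axioms of S(Gamma, D): *)
Definition is_S_module (F : fieldType) (g : 'I_3 -> 'rV[F]_3) (M : lmodType F)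
  (rho : 'rV[int]_3 -> 'rV[F]_3 -> M -> M) : Prop :=
  (forall a d (k : F) (m1 m2 : M), rho a d (k *: m1 + m2) = k *: rho a d m1 + rho a d m2)
  /\ (forall a d1 d2 (k : F) (m : M), a != 0 ->
        ev (gam g a) d1 = 0 -> ev (gam g a) d2 = 0 ->
        rho a (k *: d1 + d2) m = k *: rho a d1 m + rho a d2 m)
  (* bracket relation [x^a d1, x^b d2] = x^(a+b) (b(d1) d2 - a(d2) d1) ;
     when a + b = 0 the right-hand side is the zero element of S *)
  /\ (forall a b d1 d2 (m : M), a != 0 -> b != 0 ->
        ev (gam g a) d1 = 0 -> ev (gam g b) d2 = 0 ->
        rho a d1 (rho b d2 m) - rho b d2 (rho a d1 m) =
        (if a + b == 0 then 0
         else rho (a + b) (ev (gam g b) d1 *: d2 - ev (gam g a) d2 *: d1) m)).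

Definition is_basis (F : fieldType) (M : lmodType F) (w : 'rV[int]_3 -> M) : Prop :=
  (forall m : M, exists s k, m = lincomb w s k)
  /\ (forall s k, uniq s -> lincomb w s k = 0 -> forall t, t \in s -> k t = 0).

Definition in_weight (F : fieldType) (M : lmodType F) (w : 'rV[int]_3 -> M)
  (theta : 'rV[int]_3) (m : M) : Prop := exists k : F, m = k *: w theta.

(* Main.v *)
Require Import Defs.
From HB Require Import structures.
From mathcomp Require Import all_boot all_order all_algebra.
Import Order.TTheory GRing.Theory Num.Theory.
Local Open Scope ring_scope.

Theorem lemma3p1 (F : closedFieldType) (g : 'I_3 -> 'rV[F]_3)
  (M : lmodType F) (w : 'rV[int]_3 -> M)
  (rho : 'rV[int]_3 -> 'rV[F]_3 -> M -> M)
  (sigma nu : 'rV[int]_3) (d d' : 'rV[F]_3) :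
  [pchar F] =i pred0 ->
  (forall n : 'rV[int]_3, gam g n = 0 -> n = 0) ->
  (forall x : 'rV[F]_3, (forall n : 'rV[int]_3, ev (gam g n) x = 0) -> x = 0) ->
  is_S_module g rho ->
  is_basis w ->
  (forall a d0 theta, a != 0 -> ev (gam g a) d0 = 0 ->
     in_weight w (theta + a) (rho a d0 (w theta))) ->
  sigma != 0 -> d != 0 -> d' != 0 ->
  ev (gam g sigma) d = 0 -> ev (gam g sigma) d' = 0 ->
  exists c : F,
    (forall i : int,
       rho (- sigma) d' (rho sigma d (w (nu + sigma *~ i))) = c *: w (nu + sigma *~ i))
    /\ (c != 0 -> forall a : F, a ^+ 2 = c ->
         exists v : int -> M,
           (forall i : int, v i != 0 /\ in_weight w (nu + sigma *~ i) (v i))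
           /\ (forall i : int,
                 rho sigma d (v (i - 1)) = a *: v i
                 /\ rho (- sigma) d' (v i) = a *: v (i - 1))).
Proof.
move=> _ _ _ [Hlin [_ Hbr]] [_ Hind] Hwt sig0 _ _ esd esd'.
set A := rho sigma d. set B := rho (- sigma) d'.
have msig0 : - sigma != 0 by rewrite oppr_eq0.
have esd2 : ev (gam g (- sigma)) d' = 0.
  have -> : gam g (- sigma) = - gam g sigma.
    rewrite /gam -sumrN; apply: eq_bigr => i _.
    by rewrite mxE intrN scaleNr.
  have -> : ev (- gam g sigma) d' = - ev (gam g sigma) d'.
    by rewrite /ev -[RHS]sumrN; apply: eq_bigr => i _; rewrite mxE mulNr.
  by rewrite esd' oppr0.
have lin0 : forall a d0, rho a d0 0 = 0.
  move=> a d0; have := Hlin a d0 1 0 0; rewrite !scale1r addr0 => E.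
  by apply: (addrI (rho a d0 0)); rewrite addr0 -E.
have linZ : forall a d0 k m, rho a d0 (k *: m) = k *: rho a d0 m.
  by move=> a d0 k m; have := Hlin a d0 k m 0; rewrite !addr0 lin0 addr0.
have linA : forall k m, A (k *: m) = k *: A m by move=> *; apply: linZ.
have linB : forall k m, B (k *: m) = k *: B m by move=> *; apply: linZ.
have comm : forall m, A (B m) = B (A m).
  move=> m; apply: subr0_eq; rewrite /A /B Hbr //.
  by rewrite subrr eqxx.
have wne : forall t, w t != 0.
  move=> t; apply/negP => /eqP wt0.
  have := Hind [:: t] (fun _ => 1) isT; rewrite /lincomb big_seq1 scale1r wt0.
  by move=> /(_ erefl t); rewrite mem_seq1 eqxx => /(_ isT) /eqP; rewrite oner_eq0.
have uniqs : forall t s s', s *: w t = s' *: w t -> s = s'.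
  move=> t s s' E; apply: subr0_eq.
  have := Hind [:: t] (fun _ => s - s') isT.
  rewrite /lincomb big_seq1 scalerBl E subrr.
  by move=> /(_ erefl t); rewrite mem_seq1 eqxx => /(_ isT).
have wA : forall t, exists k, A (w t) = k *: w (t + sigma).
  by move=> t; apply: Hwt.
have wB : forall t, exists k, B (w t) = k *: w (t - sigma).
  by move=> t; apply: Hwt.
have step : forall t, exists s, B (A (w t)) = s *: w t /\
                                B (A (w (t + sigma))) = s *: w (t + sigma).
  move=> t; have [k Hk] := wA t; have [k' Hk'] := wB (t + sigma).
  rewrite addrK in Hk'.
  exists (k * k'); split; first by rewrite Hk linB Hk' scalerA.
  by rewrite -comm Hk' linA Hk scalerA mulrC.
have [c [Hc _]] := step nu.
have Pf : forall t, B (A (w t)) = c *: w t -> B (A (w (t + sigma))) = c *: w (t + sigma).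
  move=> t Ht; have [s [H1 H2]] := step t.
  by rewrite H2 (uniqs t s c) // -H1.
have Pb : forall t, B (A (w (t + sigma))) = c *: w (t + sigma) -> B (A (w t)) = c *: w t.
  move=> t Ht; have [s [H1 H2]] := step t.
  by rewrite H1 (uniqs (t + sigma) s c) // -H2.
have line : forall n, B (A (w (nu + sigma *+ n))) = c *: w (nu + sigma *+ n) /\
                      B (A (w (nu - sigma *+ n))) = c *: w (nu - sigma *+ n).
  elim=> [|n [IH1 IH2]]; first by rewrite mulr0n subr0 addr0.
  split.
    by rewrite mulrS (addrC sigma) addrA; apply: Pf.
  apply: Pb; by rewrite mulrSr opprD addrA addrNK.
have Pall : forall i : int, B (A (w (nu + sigma *~ i))) = c *: w (nu + sigma *~ i).
  case=> n; first by rewrite -pmulrn; case: (line n).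
  by rewrite NegzE mulrNz -pmulrn; case: (line n.+1).
exists c; split; first exact: Pall.
move=> c0 a Ha.
have a0 : a != 0 by apply: contraNneq c0 => a0; rewrite -Ha a0 expr0n.
have eig : forall t m k, B (A (w t)) = c *: w t -> m = k *: w t ->
    B (A m) = c *: m /\ A (B m) = c *: m.
  move=> t m k Ht ->; rewrite comm linA linB Ht scalerA mulrC -scalerA; by split.
have Ane : forall t k, B (A (w t)) = c *: w t -> k != 0 ->
    exists k', k' != 0 /\ A (k *: w t) = k' *: w (t + sigma).
  move=> t k Ht k0; have [k1 Hk1] := wA t; exists (k * k1); split; last first.
    by rewrite linA Hk1 scalerA.
  rewrite mulf_neq0 //; apply: contra_neq c0 => k10.
  have : c *: w t = 0 by rewrite -Ht Hk1 k10 scale0r /B lin0.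
  by move/eqP; rewrite scaler_eq0 (negbTE (wne t)) orbF => /eqP.
have Bne : forall t k, B (A (w (t - sigma))) = c *: w (t - sigma) -> k != 0 ->
    exists k', k' != 0 /\ B (k *: w t) = k' *: w (t - sigma).
  move=> t k Ht k0; have [k1 Hk1] := wB t; exists (k * k1); split; last first.
    by rewrite linB Hk1 scalerA.
  rewrite mulf_neq0 //; apply: contra_neq c0 => k10.
  have : c *: w (t - sigma) = 0.
    have [k2 Hk2] := wA (t - sigma).
    by rewrite -Ht Hk2 subrK linB Hk1 k10 !scale0r scaler0.
  by move/eqP; rewrite scaler_eq0 (negbTE (wne _)) orbF => /eqP.
pose u n := iter n (fun m => a^-1 *: A m) (w nu).
pose u' n := iter n (fun m => a^-1 *: B m) (w nu).
have Hu : forall n, exists k, k != 0 /\ u n = k *: w (nu + sigma *+ n).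
  elim=> [|n [k [k0 IH]]]; first by exists 1; rewrite oner_eq0 mulr0n addr0 scale1r.
  have [k' [k'0 Hk']] := Ane _ k (proj1 (line n)) k0.
  exists (a^-1 * k'); split; first by rewrite mulf_neq0 // invr_eq0.
  by rewrite /= -/(u n) IH Hk' scalerA mulrS (addrC sigma) addrA.
have Hu' : forall n, exists k, k != 0 /\ u' n = k *: w (nu - sigma *+ n).
  elim=> [|n [k [k0 IH]]]; first by exists 1; rewrite oner_eq0 mulr0n subr0 scale1r.
  have E : nu - sigma *+ n - sigma = nu - sigma *+ n.+1 by rewrite mulrSr opprD addrA.
  have [k' [k'0 Hk']] := Bne (nu - sigma *+ n) k (ltac:(rewrite E; exact: proj2 (line n.+1))) k0.
  exists (a^-1 * k'); split; first by rewrite mulf_neq0 // invr_eq0.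
  by rewrite /= -/(u' n) IH Hk' scalerA E.
have eu : forall n, B (A (u n)) = c *: u n /\ A (B (u n)) = c *: u n.
  by move=> n; have [k [_ E]] := Hu n; exact: eig _ _ _ (proj1 (line n)) E.
have eu' : forall n, B (A (u' n)) = c *: u' n /\ A (B (u' n)) = c *: u' n.
  by move=> n; have [k [_ E]] := Hu' n; exact: eig _ _ _ (proj2 (line n)) E.
have aK : forall m : M, a *: (a^-1 *: m) = m by move=> m; rewrite scalerA mulfV // scale1r.
have aC : a^-1 * c = a by rewrite -Ha expr2 mulKf.
have R1 : forall n, A (u n) = a *: u n.+1 /\ B (u n.+1) = a *: u n.
  move=> n; split; first by rewrite /= -/(u n) aK.
  by rewrite /= -/(u n) linB (proj1 (eu n)) scalerA aC.
have R2 : forall n, B (u' n) = a *: u' n.+1 /\ A (u' n.+1) = a *: u' n.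
  move=> n; split; first by rewrite /= -/(u' n) aK.
  by rewrite /= -/(u' n) linA (proj2 (eu' n)) scalerA aC.
exists (fun i => match i with Posz n => u n | Negz n => u' n.+1 end); split.
  case=> n.
    have [k [k0 E]] := Hu n; split; last by exists k; rewrite E pmulrn.
    by rewrite E scaler_eq0 negb_or k0 wne.
  have [k [k0 E]] := Hu' n.+1; split; last by exists k; rewrite E NegzE mulrNz pmulrn.
  by rewrite E scaler_eq0 negb_or k0 wne.
case=> [[|n]|n].
- have -> : (Posz 0 - 1) = Negz 0 by [].
  by case: (R2 0) => [H1 H2]; split.
- have -> : (Posz n.+1 - 1) = Posz n by rewrite intS addrC addKr.
  exact: R1.
- have -> : (Negz n - 1) = Negz n.+1 by rewrite !NegzE -opprD addrC.
  by case: (R2 n.+1) => [H1 H2]; split.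
Qed.
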